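(* The set $\mathbb{P}_2$ is a $\mathbf{\Pi}^1_2$-complete subset of $2^{[\mathbb{N}]^{<\omega}}$.
   Context: $2^{[\mathbb{N}]^{<\omega}}$ is the Cantor space of subsets of the countable set $[\mathbb{N}]^{<\omega}$ of finite subsets of $\mathbb{N}$. For finite $s$ and $t\subseteq\mathbb{N}$, $s\sqsubseteq t$ means $s=t\cap\{0,\dots,n\}$ for some $n$. $\mathbb{P}_2$ is the set of all $\mathcal{F}\subseteq[\mathbb{N}]^{<\omega}$ such that there is no infinite $y\subseteq\mathbb{N}$ with the property that every infinite $z\subseteq y$ has an initial segment $s\sqsubseteq z$ with $s\in\mathcal{F}$. *)

(* Defs.v *)
From mathcomp Require Import all_boot.
Set Implicit Arguments. Unset Strict Implicit. Unset Printing Implicit Defensive.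

(** Finite subsets of N, represented canonically as strictly increasing lists. *)
Definition finset_nat := {s : seq nat | sorted ltn s}.

Definition infinite_set (z : nat -> bool) : Prop := forall n, exists m, n <= m /\ z m.

Definition init_seg (s : finset_nat) (z : nat -> bool) : Prop :=
  exists n, forall k, (k \in val s) = (k <= n) && z k.

Definition Xspace := finset_nat -> bool.

Definition P2 (F : Xspace) : Prop :=
  ~ exists y : nat -> bool, infinite_set y /\
      forall z : nat -> bool, (forall k, z k -> y k) -> infinite_set z ->
        exists s, init_seg s z /\ F s.

(** Product topology on I -> A (A discrete): agreement on finitely many coordinates. *)
Definition agree (I : eqType) (A : Type) (L : seq I) (x y : I -> A) : Prop :=
  forall i, i \in L -> x i = y i.

Definition agree_upto (A : Type) (N : nat) (a b : nat -> A) : Prop :=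
  forall n, n < N -> a n = b n.

Definition closed3 (I : eqType) (A : Type)
    (C : (I -> A) -> (nat -> nat) -> (nat -> nat) -> Prop) : Prop :=
  forall x a b, ~ C x a b ->
    exists (L : seq I) (N : nat), forall y a' b',
      agree L x y -> agree_upto N a a' -> agree_upto N b b' -> ~ C y a' b'.

(** Boldface projective classes, following the standard definitions:
    Sigma^1_1 = projections of closed sets along N^N, Pi^1_1 = complements,
    Sigma^1_2 = projections of Pi^1_1 sets along N^N, Pi^1_2 = complements. *)
Definition Sigma11_2 (I : eqType) (A : Type)
    (P : (I -> A) -> (nat -> nat) -> Prop) : Prop :=
  exists C, closed3 C /\ forall x a, P x a <-> exists b, C x a b.

Definition Pi11_2 (I : eqType) (A : Type)
    (P : (I -> A) -> (nat -> nat) -> Prop) : Prop :=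
  Sigma11_2 (fun x a => ~ P x a).

Definition Sigma12 (I : eqType) (A : Type) (S : (I -> A) -> Prop) : Prop :=
  exists P, Pi11_2 P /\ forall x, S x <-> exists a, P x a.

Definition Pi12 (I : eqType) (A : Type) (S : (I -> A) -> Prop) : Prop :=
  Sigma12 (fun x => ~ S x).

Definition continuous_map (I J : eqType) (A B : Type) (f : (I -> A) -> (J -> B)) : Prop :=
  forall x j, exists L : seq I, forall y, agree L x y -> f y j = f x j.

Definition Pi12_complete (J : eqType) (B : Type) (S : (J -> B) -> Prop) : Prop :=
  Pi12 S /\
  forall T : (nat -> nat) -> Prop, Pi12 (I := nat) T ->
    exists f : (nat -> nat) -> (J -> B),
      continuous_map (I := nat) f /\ forall y, T y <-> S (f y).

(* Main.v *)
Require Import Defs.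
From mathcomp Require Import all_boot zify.
From Stdlib Require ClassicalEpsilon Classical.
Set Implicit Arguments. Unset Strict Implicit. Unset Printing Implicit Defensive.

Definition pb (P : Prop) : bool :=
  if ClassicalEpsilon.excluded_middle_informative P then true else false.
Lemma pbP (P : Prop) : pb P <-> P.
Proof. rewrite /pb; case: ClassicalEpsilon.excluded_middle_informative => //. Qed.

Definition segl (z : nat -> bool) (N : nat) := [seq k <- iota 0 N.+1 | z k].
Lemma segl_sorted z N : sorted ltn (segl z N).
Proof. apply: sorted_filter; [exact: ltn_trans | exact: iota_ltn_sorted]. Qed.
Definition segf z N : finset_nat := exist _ (segl z N) (segl_sorted z N).
Lemma mem_segl z N k : (k \in segl z N) = (k <= N) && z k.
Proof. by rewrite mem_filter mem_iota add0n ltnS andbC. Qed.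
Lemma init_seg_segf z N : init_seg (segf z N) z.
Proof. by exists N => k; rewrite /= mem_segl. Qed.
Lemma init_segE s z : init_seg s z -> exists N, s = segf z N.
Proof.
case=> N HN; exists N; apply: val_inj => /=.
apply: (irr_sorted_eq (leT := ltn)); [exact: ltn_trans | exact: ltnn | exact: (valP s) | exact: segl_sorted|].
by move=> k; rewrite HN mem_segl.
Qed.

Lemma sorted_ltn_map (e : nat -> nat) (He : forall i, e i < e i.+1) a c :
  sorted ltn (map e (iota a c)).
Proof.
elim: c a => [|c IH] a //=.
case: c IH => [|c] IH //=.
move: (IH a.+1) => /= ->; by rewrite He.
Qed.

Lemma incr_lt (e : nat -> nat) (He : forall i, e i < e i.+1) i j : i < j -> e i < e j.
Proof.
elim: j => // j IH; rewrite ltnS leq_eqVlt => /orP [/eqP -> | /IH h] //.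
exact: ltn_trans h (He j).
Qed.
Lemma incr_le (e : nat -> nat) (He : forall i, e i < e i.+1) i j : i <= j -> e i <= e j.
Proof. rewrite leq_eqVlt => /orP [/eqP -> // | h]; exact: ltnW (incr_lt He h). Qed.
Lemma incr_ge (e : nat -> nat) (He : forall i, e i < e i.+1) i : i <= e i.
Proof. elim: i => // i IH; exact: leq_ltn_trans IH (He i). Qed.
Lemma incr_inj_lt (e : nat -> nat) (He : forall i, e i < e i.+1) i j : (e i < e j) = (i < j).
Proof.
case: (ltnP i j) => h; first by rewrite incr_lt.
by apply/negbTE; rewrite -leqNgt; apply: incr_le.
Qed.

Lemma segl_enum (z : nat -> bool) (e : nat -> nat) (He : forall i, e i < e i.+1)
  (Hz : forall k, z k <-> exists i, e i = k) N :
  exists c, segl z N = map e (iota 0 c) /\ (forall i, (i < c) = (e i <= N)).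
Proof.
have ex : exists i, N < e i by exists N.+1; exact: incr_ge He N.+1.
exists (ex_minn ex); case: ex_minnP => c Hc Hmin.
have Hi : forall i, (i < c) = (e i <= N).
  move=> i; case: (ltnP i c) => h.
    by apply/esym; rewrite leqNgt; apply/negP => /Hmin; rewrite leqNgt h.
  by apply/esym/negbTE; rewrite -ltnNge; exact: leq_trans Hc (incr_le He h).
split=> //.
apply: (irr_sorted_eq (leT := ltn)); [exact: ltn_trans | exact: ltnn | exact: segl_sorted | exact: sorted_ltn_map|].
move=> k; rewrite mem_segl; apply/idP/idP.
  case/andP=> hk /Hz [i ei]; apply/mapP; exists i => //.
  by rewrite mem_iota add0n Hi ei.
case/mapP=> i; rewrite mem_iota add0n /= Hi => hi ->.
by rewrite hi /=; apply/Hz; exists i.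
Qed.

Lemma segl_enum_at (z : nat -> bool) (e : nat -> nat) (He : forall i, e i < e i.+1)
  (Hz : forall k, z k <-> exists i, e i = k) i :
  segl z (e i) = map e (iota 0 i.+1).
Proof.
have [c [-> Hc]] := segl_enum He Hz (e i).
suff -> : c = i.+1 by [].
apply/eqP; rewrite eqn_leq; apply/andP; split.
  case: c Hc => // c Hc; have := Hc c; rewrite ltnSn => /esym.
  by rewrite ltnS leqNgt (incr_inj_lt He) -leqNgt.
by rewrite Hc.
Qed.

Lemma inf_ex z (Hz : infinite_set z) m : exists k, (m <= k) && z k.
Proof. by case: (Hz m) => k [h1 h2]; exists k; rewrite h1 h2. Qed.
Definition nextz z (Hz : infinite_set z) m := ex_minn (inf_ex Hz m).
Lemma nextzP z (Hz : infinite_set z) m :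
  [/\ m <= nextz Hz m, z (nextz Hz m) & forall k, m <= k -> z k -> nextz Hz m <= k].
Proof.
rewrite /nextz; case: ex_minnP => n /andP [h1 h2] hm; split => // k a b.
by apply: hm; rewrite a b.
Qed.
Fixpoint enumz z (Hz : infinite_set z) i :=
  match i with 0 => nextz Hz 0 | i.+1 => nextz Hz (enumz Hz i).+1 end.
Lemma enumz_in z (Hz : infinite_set z) i : z (enumz Hz i).
Proof. by case: i => [|i] /=; [case: (nextzP Hz 0) | case: (nextzP Hz (enumz Hz i).+1)]. Qed.
Lemma enumz_incr z (Hz : infinite_set z) i : enumz Hz i < enumz Hz i.+1.
Proof. by rewrite /=; case: (nextzP Hz (enumz Hz i).+1). Qed.
Lemma enumz_range z (Hz : infinite_set z) k : z k <-> exists i, enumz Hz i = k.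
Proof.
split; last by case=> i <-; exact: enumz_in.
move=> zk.
have ex : exists i, k < enumz Hz i by exists k.+1; exact: incr_ge (enumz_incr Hz) k.+1.
case: (ex_minnP ex) => c Hc Hmin.
case: c Hc Hmin => [|c] Hc Hmin.
  by move: Hc; case: (nextzP Hz 0) => _ _ /(_ k (leq0n k) zk); rewrite leqNgt => /negbTE ->.
have hc : enumz Hz c <= k by rewrite leqNgt; apply/negP => /Hmin; rewrite ltnn.
move: Hc => /=; case: (nextzP Hz (enumz Hz c).+1) => _ _ /(_ k) h hlt.
case: (ltngtP (enumz Hz c) k) hc => // [hl|he] _.
  by have := h hl zk; rewrite leqNgt hlt.
by exists c.
Qed.

Definition local3 (I : eqType) (A : Type)
    (D : (I -> A) -> (nat -> nat) -> (nat -> nat) -> Prop) : Prop :=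
  forall x a b, exists (L : seq I) (N : nat), forall y a' b',
    agree L x y -> agree_upto N a a' -> agree_upto N b b' -> (D y a' b' <-> D x a b).

Lemma agree_catl (I : eqType) (A : Type) (L1 L2 : seq I) (x y : I -> A) :
  agree (L1 ++ L2) x y -> agree L1 x y.
Proof. by move=> h i hi; apply: h; rewrite mem_cat hi. Qed.
Lemma agree_catr (I : eqType) (A : Type) (L1 L2 : seq I) (x y : I -> A) :
  agree (L1 ++ L2) x y -> agree L2 x y.
Proof. by move=> h i hi; apply: h; rewrite mem_cat hi orbT. Qed.
Lemma agree_upto_le (A : Type) N M (a b : nat -> A) :
  N <= M -> agree_upto M a b -> agree_upto N a b.
Proof. by move=> hNM h n hn; apply: h; exact: leq_trans hn hNM. Qed.

Lemma closed3_all (I : eqType) (A : Type)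
    (D : nat -> (I -> A) -> (nat -> nat) -> (nat -> nat) -> Prop) :
  (forall n, local3 (D n)) -> closed3 (fun x a b => forall n, D n x a b).
Proof.
move=> hl x a b hn.
have [n hn'] : exists n, ~ D n x a b by apply: Classical_Pred_Type.not_all_ex_not.
have [L [N hLN]] := hl n x a b.
exists L, N => y a' b' h1 h2 h3 hall; apply: hn'; apply/(hLN y a' b') => //.
Qed.

Lemma closed3_or (I : eqType) (A : Type)
    (C1 C2 : (I -> A) -> (nat -> nat) -> (nat -> nat) -> Prop) :
  closed3 C1 -> closed3 C2 -> closed3 (fun x a b => C1 x a b \/ C2 x a b).
Proof.
move=> h1 h2 x a b hn.
have [L1 [N1 H1]] := h1 x a b (fun c => hn (or_introl c)).
have [L2 [N2 H2]] := h2 x a b (fun c => hn (or_intror c)).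
exists (L1 ++ L2), (maxn N1 N2) => y a' b' hy ha hb [c|c].
  by apply: (H1 y a' b') c; [exact: agree_catl hy | apply: agree_upto_le ha; exact: leq_maxl | apply: agree_upto_le hb; exact: leq_maxl].
by apply: (H2 y a' b') c; [exact: agree_catr hy | apply: agree_upto_le ha; exact: leq_maxr | apply: agree_upto_le hb; exact: leq_maxr].
Qed.

Lemma closed3_and (I : eqType) (A : Type)
    (C1 C2 : (I -> A) -> (nat -> nat) -> (nat -> nat) -> Prop) :
  closed3 C1 -> closed3 C2 -> closed3 (fun x a b => C1 x a b /\ C2 x a b).
Proof.
move=> h1 h2 x a b hn.
have [c1|c1] := Classical_Prop.classic (C1 x a b).
  have c2 : ~ C2 x a b by move=> c2; apply: hn.
  have [L2 [N2 H2]] := h2 x a b c2.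
  by exists L2, N2 => y a' b' hy ha hb [_ c]; apply: (H2 y a' b').
have [L1 [N1 H1]] := h1 x a b c1.
by exists L1, N1 => y a' b' hy ha hb [c _]; apply: (H1 y a' b').
Qed.

Fixpoint eb (b : nat -> nat) i := match i with 0 => b 1 | i.+1 => eb b i + b i.+2 + 1 end.
Lemma eb_incr b i : eb b i < eb b i.+1.
Proof. by rewrite /= addn1 ltnS leq_addr. Qed.
Definition zb b k := has (fun i => eb b i == k) (iota 0 k.+1).
Lemma zb_range b k : zb b k <-> exists i, eb b i = k.
Proof.
split; first by case/hasP => i _ /eqP; exists i.
case=> i hi; apply/hasP; exists i => //.
  by rewrite mem_iota add0n ltnS -hi; exact: incr_ge (@eb_incr b) i.
by rewrite hi.
Qed.
Lemma eb_agree b b' i N : i.+2 <= N -> agree_upto N b b' -> eb b' i = eb b i.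
Proof.
move=> hN h; elim: i hN => [|i IH] hN /=; first by rewrite h //; exact: leq_trans hN.
by rewrite IH ?(ltnW hN) // h.
Qed.
Lemma zb_agree b b' k N : k.+2 <= N -> agree_upto N b b' -> zb b' k = zb b k.
Proof.
move=> hN h; apply: eq_in_has => i; rewrite mem_iota add0n ltnS => hi.
by rewrite (@eb_agree b b' i N) // (leq_trans _ hN) // ltnS ltnS.
Qed.
Lemma segf_zb_agree b b' N : agree_upto N.+2 b b' -> segf (zb b') N = segf (zb b) N.
Proof.
move=> h; apply: val_inj => /=; apply: eq_in_filter => k; rewrite mem_iota add0n ltnS => hk.
by apply: (@zb_agree b b' k N.+2).
Qed.

Definition Pmem (F : Xspace) (a : nat -> nat) : Prop :=
  infinite_set (fun k => a k != 0) /\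
  forall z : nat -> bool, (forall k, z k -> a k != 0) -> infinite_set z ->
    exists s, init_seg s z /\ F s.

Definition Cmem (F : Xspace) (a b : nat -> nat) : Prop :=
  (b 0 = 0 /\ ((forall i, a (eb b i) <> 0) /\ (forall N, F (segf (zb b) N) = false)))
  \/ (forall m, b 0 <> 0 /\ (b 0 <= m -> a m = 0)).

Lemma Cmem_closed : closed3 Cmem.
Proof.
apply: closed3_or; last first.
  apply: (closed3_all (D := fun m F a b => b 0 <> 0 /\ (b 0 <= m -> a m = 0))) => m F a b.
  exists [::], m.+1 => y a' b' _ ha hb.
  by rewrite (hb 0) // (ha m) ?(hb 0 (ltn0Sn m)) // ?ltnSn.
apply: closed3_and.
  move=> F a b hn; exists [::], 1 => y a' b' _ _ hb; by rewrite -(hb 0).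
apply: closed3_and.
  apply: (closed3_all (D := fun i F a b => a (eb b i) <> 0)) => i F a b.
  exists [::], (maxn i.+2 (eb b i).+1) => y a' b' _ ha hb.
  rewrite (@eb_agree b b' i (maxn i.+2 (eb b i).+1)) ?leq_maxl //.
  by rewrite ha // leq_max ltnSn orbT.
apply: (closed3_all (D := fun N F a b => F (segf (zb b) N) = false)) => N F a b.
exists [:: segf (zb b) N], N.+2 => y a' b' hy _ hb.
by rewrite (@segf_zb_agree b b' N hb) -hy // mem_seq1.
Qed.

Lemma inf_ext (y z : nat -> bool) : (forall k, y k = z k) -> infinite_set y -> infinite_set z.
Proof. by move=> h hy n; case: (hy n) => m [h1 h2]; exists m; rewrite -h. Qed.

Lemma notPmem F a : ~ Pmem F a <-> exists b, Cmem F a b.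
Proof.
split.
  move=> hP.
  have [hinf|hinf] := Classical_Prop.classic (infinite_set (fun k => a k != 0)).
    have [z hz] : exists z : nat -> bool, ~ ((forall k, z k -> a k != 0) -> infinite_set z ->
         exists s, init_seg s z /\ F s).
      apply: Classical_Pred_Type.not_all_ex_not => hall; apply: hP; split => // z; exact: hall.
    have [hsub [Hz hno]] : (forall k, z k -> a k != 0) /\ infinite_set z /\
        ~ exists s, init_seg s z /\ F s by tauto.
    pose e := enumz Hz.
    pose b k := match k with 0 => 0 | 1 => e 0 | k'.+2 => e k'.+1 - e k' - 1 end.
    have ebe : forall i, eb b i = e i.
      elim=> [|i IH] //=; rewrite IH /b.
      have h := enumz_incr Hz i; rewrite -/e in h.
      lia.
    have zbz : forall k, zb b k = z k.
      move=> k; apply/idP/idP.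
        by case/zb_range => i <-; rewrite ebe; exact: enumz_in.
      by move/(enumz_range Hz) => [i <-]; apply/zb_range; exists i; rewrite ebe.
    exists b; left; split=> //; split.
      by move=> i; rewrite ebe; apply/eqP; apply: hsub; exact: enumz_in.
    move=> N; apply/negP => hF; apply: hno; exists (segf z N); split; first exact: init_seg_segf.
    suff <- : segf (zb b) N = segf z N by [].
    by apply: val_inj => /=; apply: eq_filter => k; rewrite zbz.
  have [n hn] : exists n, forall m, n <= m -> a m = 0.
    apply: Classical_Prop.NNPP => hno; apply: hinf => n.
    apply: Classical_Prop.NNPP => hno2; apply: hno; exists n => m hm.
    by apply/eqP/negPn/negP => hne; apply: hno2; exists m; split.
  exists (fun k => if k == 0 then n.+1 else 0); right => m /=; split=> // h.
  exact: hn (leq_trans (leqnSn n) h).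
case=> b [[hb0 [ha hF]] | hr] [hinf hall].
  have hsub : forall k, zb b k -> a k != 0.
    by move=> k /zb_range [i <-]; apply/eqP; exact: ha.
  have hzinf : infinite_set (zb b).
    move=> n; exists (eb b n); split; first exact: incr_ge (@eb_incr b) n.
    by apply/zb_range; exists n.
  have [s [hs Fs]] := hall _ hsub hzinf.
  have [N hN] := init_segE hs.
  by rewrite hN hF in Fs.
have [h0 _] := hr 0.
have [m [hm am]] := hinf (b 0).
have [_ h] := hr m.
by rewrite h // in am.
Qed.

Lemma P2_Pi12 : Pi12 P2.
Proof.
exists Pmem; split.
  exists Cmem; split; first exact: Cmem_closed.
  by move=> F a; apply: notPmem.
move=> F; split.
  move=> hnP; have [y [hy hall]] := Classical_Prop.NNPP _ hnP.
  exists (fun k => nat_of_bool (y k)).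
  have e : forall k, y k = (nat_of_bool (y k) != 0) by move=> k; case: (y k).
  split; first by apply: inf_ext hy.
  by move=> z hz hzi; apply: hall => // k /hz; rewrite -e.
case=> a [hinf hall] hP; apply: hP; exists (fun k => a k != 0); split => //.
Qed.

Definition dec (m : nat) : seq nat := odflt [::] (@unpickle (seq nat) (logn 2 m)).
Definition code (s : seq nat) (q : nat) : nat := 2 ^ pickle s * (q.*2).+1.
Lemma decK s q : dec (code s q) = s.
Proof.
rewrite /dec /code lognM ?expn_gt0 // pfactorK //.
have -> : logn 2 (q.*2).+1 = 0.
  by rewrite lognE /= dvdn2 /= odd_double.
by rewrite addn0 pickleK.
Qed.
Lemma code_gt s q : q < code s q.
Proof.
rewrite /code; apply: (@leq_trans (q.*2).+1); first by rewrite ltnS -addnn leq_addr.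
by rewrite leq_pmull // expn_gt0.
Qed.

Lemma sorted_map_iota (r : rel nat) (e : nat -> nat) (He : forall i, r (e i) (e i.+1)) a c :
  sorted r (map e (iota a c)).
Proof.
elim: c a => [|c IH] a //=.
case: c IH => [|c] IH //=.
move: (IH a.+1) => /= ->; by rewrite He.
Qed.

Definition rng (e : nat -> nat) k := has (fun i => e i == k) (iota 0 k.+1).
Lemma rng_range (e : nat -> nat) (He : forall i, e i < e i.+1) k :
  rng e k <-> exists i, e i = k.
Proof.
split; first by case/hasP => i _ /eqP; exists i.
case=> i hi; apply/hasP; exists i => //.
  by rewrite mem_iota add0n ltnS -hi; exact: incr_ge He i.
by rewrite hi.
Qed.
Lemma rng_inf (e : nat -> nat) (He : forall i, e i < e i.+1) : infinite_set (rng e).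
Proof.
move=> n; exists (e n); split; first exact: incr_ge He n.
by apply/rng_range => //; exists n.
Qed.

Definition node (C : (nat -> nat) -> (nat -> nat) -> (nat -> nat) -> Prop)
  (y a : nat -> nat) (t : seq nat) : Prop :=
  exists y' a' b', (forall i, i < size t -> [/\ y' i = y i, a' i = a i & b' i = nth 0 t i])
    /\ C y' a' b'.

Lemma node_take C y a t j : node C y a t -> node C y a (take j t).
Proof.
case=> y' [a' [b' [h hC]]]; exists y', a', b'; split => // i; rewrite size_take => hi.
have hit : i < size t by move: hi; case: ifP => // h1 h2; exact: ltn_trans h2 h1.
have [h1 h2 h3] := h i hit; split => //; rewrite nth_take //.
by move: hi; case: ifP => // h4 h5; lia.
Qed.

Lemma node_ext C y y2 a a2 t : (forall i, i < size t -> y i = y2 i /\ a i = a2 i) ->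
  node C y a t -> node C y2 a2 t.
Proof.
move=> he [y' [a' [b' [h hC]]]]; exists y', a', b'; split => // i hi.
have [h1 h2 h3] := h i hi; have [e1 e2] := he i hi; split => //; congruence.
Qed.

Lemma node_of_C C y a b m : C y a b -> node C y a (mkseq b m).
Proof.
move=> hC; exists y, a, b; split => // i; rewrite size_mkseq => hi.
by rewrite nth_mkseq.
Qed.

Lemma leq_sumn_mem (L : seq nat) i : i \in L -> i <= sumn L.
Proof.
elim: L => // x L IH; rewrite in_cons => /orP [/eqP -> | h] /=; first exact: leq_addr.
exact: leq_trans (IH h) (leq_addl _ _).
Qed.

Lemma branch_C C y a b : closed3 (I := nat) C -> (forall m, node C y a (mkseq b m)) -> C y a b.
Proof.
move=> hcl hall; apply: Classical_Prop.NNPP => hn.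
have := hcl y a b hn. move=> [L [N hLN]].
have [y' [a' [b' [h hC]]]] := hall (N + sumn L).+1.
apply: (hLN y' a' b') hC.
- move=> i hi.
  have hh : i < (N + sumn L).+1 by rewrite ltnS; exact: leq_trans (leq_sumn_mem hi) (leq_addl _ _).
  by have [-> _ _] := h i ltac:(by rewrite size_mkseq).
- move=> i hi.
  have hh : i < (N + sumn L).+1 by rewrite ltnS; exact: leq_trans (ltnW hi) (leq_addr _ _).
  by have [_ -> _] := h i ltac:(by rewrite size_mkseq).
- move=> i hi.
  have hh : i < (N + sumn L).+1 by rewrite ltnS; exact: leq_trans (ltnW hi) (leq_addr _ _).
  by have [_ _ ->] := h i ltac:(by rewrite size_mkseq); rewrite nth_mkseq.
Qed.

Definition bnd (B : nat -> nat) (t : seq nat) := forall i, i < size t -> nth 0 t i < B i.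

Definition good (P : seq nat -> Prop) B t :=
  forall m, exists u, size u = m /\ P (t ++ u) /\ bnd B (t ++ u).

Lemma fin_max (bad : nat -> nat -> Prop) (mono : forall x m M, m <= M -> bad x m -> bad x M) n :
  (forall x, x < n -> exists m, bad x m) -> exists M, forall x, x < n -> bad x M.
Proof.
elim: n => [|n IH] h; first by exists 0.
have [M hM] := IH (fun x hx => h x (ltnW hx)).
have [m hm] := h n (ltnSn n).
exists (maxn M m) => x; rewrite ltnS leq_eqVlt => /orP [/eqP -> | hx].
  by apply: mono hm; exact: leq_maxr.
by apply: (mono x M); [exact: leq_maxl | exact: hM].
Qed.

Lemma good_step (P : seq nat -> Prop) B (Ptake : forall t j, P t -> P (take j t)) t :
  good P B t -> exists x, good P B (rcons t x).
Proof.
move=> hg; apply: Classical_Prop.NNPP => hno.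
pose bad x m := ~ exists u, size u = m /\ P (rcons t x ++ u) /\ bnd B (rcons t x ++ u).
have mono : forall x m M, m <= M -> bad x m -> bad x M.
  move=> x m M hmM hb [u [hu [hP hB]]]; apply: hb; exists (take m u); split.
    by rewrite size_take hu; case: ltngtP hmM => //; lia.
  split.
    have -> : rcons t x ++ take m u = take ((size t).+1 + m) (rcons t x ++ u).
      by rewrite take_cat size_rcons ltnNge leq_addr /= addKn.
    exact: Ptake.
  move=> i; rewrite size_cat size_rcons size_take => hi.
  have hm : minn m (size u) = m by apply/minn_idPl; rewrite hu.
  have hi' : i < size (rcons t x ++ u).
    rewrite size_cat size_rcons hu; move: hi; case: ifP => _; lia.
  have := hB i hi'.
  rewrite !nth_cat size_rcons; case: ifP => // hit.
  rewrite nth_take //; move: hi; case: ifP => h1 h2; move/negbT: hit; rewrite -leqNgt => h3; lia.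
have hall : forall x, x < B (size t) -> exists m, bad x m.
  move=> x _; apply: Classical_Prop.NNPP => hn; apply: hno; exists x => m.
  by apply: Classical_Prop.NNPP => hn2; apply: hn; exists m.
have [M hM] := fin_max mono hall.
have [u [hu [hP hB]]] := hg M.+1.
case: u hu hP hB => // x u [hu] hP hB.
have hx : x < B (size t).
  have := hB (size t); rewrite nth_cat ltnn subnn /=; apply; rewrite size_cat /=; lia.
apply: (hM x hx); exists u; split => //.
by rewrite cat_rcons.
Qed.

Lemma konig (P : seq nat -> Prop) (B : nat -> nat) :
  (forall t j, P t -> P (take j t)) ->
  (forall m, exists t, size t = m /\ P t /\ bnd B t) ->
  exists b : nat -> nat, forall m, P (mkseq b m).
Proof.
move=> Ptake hlev.
have H' : forall t, exists x, good P B t -> good P B (rcons t x).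
  move=> t; have [hg|hg] := Classical_Prop.classic (good P B t).
    by have [x hx] := good_step Ptake hg; exists x.
  by exists 0.
pose g t := proj1_sig (ClassicalEpsilon.constructive_indefinite_description _ (H' t)).
have hgP : forall t, good P B t -> good P B (rcons t (g t)).
  by move=> t; rewrite /g; case: ClassicalEpsilon.constructive_indefinite_description.
pose fix pre n := match n with 0 => [::] | n'.+1 => rcons (pre n') (g (pre n')) end.
have gpre : forall n, good P B (pre n).
  elim=> [|n IH] /=; last exact: hgP.
  by move=> m; have [t [h1 [h2 h3]]] := hlev m; exists t.
exists (fun n => g (pre n)) => m.
have -> : mkseq (fun n => g (pre n)) m = pre m.
  by elim: m => [|m IH] //=; rewrite mkseqS IH.
have [u [hu [hP _]]] := gpre m 0.
by move: hP; case: u hu => // _; rewrite cats0.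
Qed.

Definition sp (s t : seq nat) : bool := (size s < size t) && (take (size s) t == s).

Definition Fprop (C : (nat -> nat) -> (nat -> nat) -> (nat -> nat) -> Prop)
  (y : nat -> nat) (s : seq nat) : Prop :=
  [/\ 2 <= size s, sorted (fun u v => sp (dec u) (dec v)) s &
   ~ exists t, [/\ size t = (size s).-1,
        node C y (fun i => nth 0 (dec (last 0 s)) i) t & bnd (nth 0 s) t]].

Definition fmap C (y : nat -> nat) : Xspace := fun j => pb (Fprop C y (val j)).

Lemma pb_ext (P Q : Prop) : (P <-> Q) -> pb P = pb Q.
Proof.
move=> h; case E1: (pb P); case E2: (pb Q) => //.
  by move/pbP: E1 => /h /pbP; rewrite E2.
by move/pbP: E2 => /h /pbP; rewrite E1.
Qed.

Lemma fmap_cont C : continuous_map (I := nat) (fmap C).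
Proof.
move=> x j; exists (iota 0 (size (val j))) => y hy; apply: pb_ext.
have key : forall y1 y2 t, (forall i, i < size (val j) -> y1 i = y2 i) ->
    size t = (size (val j)).-1 ->
    node C y1 (fun i => nth 0 (dec (last 0 (val j))) i) t ->
    node C y2 (fun i => nth 0 (dec (last 0 (val j))) i) t.
  move=> y1 y2 t he hs; apply: node_ext => i hi; split => //; apply: he; lia.
have hxy : forall i, i < size (val j) -> x i = y i.
  by move=> i hi; apply: hy; rewrite mem_iota add0n.
split; case=> h1 h2 h3; split => // [[t [t1 t2 t3]]]; apply: h3; exists t; split => //.
  by apply: (key x y).
by apply: (key y x) => // i hi; rewrite hxy.
Qed.

Lemma nth_map_iota (e : nat -> nat) c i : i < c -> nth 0 (map e (iota 0 c)) i = e i.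
Proof. by move=> h; rewrite (nth_map 0) ?size_iota // nth_iota. Qed.
Lemma last_map_iota (e : nat -> nat) c : last 0 (map e (iota 0 c.+1)) = e c.
Proof. by rewrite -nth_last size_map size_iota; apply: nth_map_iota. Qed.

Fixpoint cseq (a : nat -> nat) n := match n with
  | 0 => code (mkseq a 1) 0 | n'.+1 => code (mkseq a n'.+2) (cseq a n') end.
Lemma cseq_incr a n : cseq a n < cseq a n.+1.
Proof. exact: code_gt. Qed.
Lemma cseq_dec a n : dec (cseq a n) = mkseq a n.+1.
Proof. by case: n => [|n] /=; rewrite decK. Qed.

Lemma dirA C y a : closed3 (I := nat) C -> (forall b, ~ C y a b) ->
  exists w, infinite_set w /\ forall z : nat -> bool, (forall k, z k -> w k) -> infinite_set z ->
    exists s, init_seg s z /\ fmap C y s.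
Proof.
move=> hcl hnb; exists (rng (cseq a)); split; first exact: rng_inf (@cseq_incr a).
move=> z hzw Hz; apply: Classical_Prop.NNPP => hno.
pose e := enumz Hz.
have wdec : forall i, exists j, cseq a j = e i.
  by move=> i; apply/(rng_range (@cseq_incr a)); apply: hzw; exact: enumz_in.
have edec : forall i, exists j, i <= j /\ dec (e i) = mkseq a j.+1.
  elim=> [|i [j [hij hj]]].
    by have [j hj] := wdec 0; exists j; rewrite -hj cseq_dec.
  have [j' hj'] := wdec i.+1; exists j'; rewrite -hj' cseq_dec; split => //.
  have [j0 hj0] := wdec i.
  have hlt : cseq a j0 < cseq a j' by rewrite hj0 hj'; exact: enumz_incr.
  rewrite (incr_inj_lt (@cseq_incr a)) in hlt.
  move: hj; rewrite -hj0 cseq_dec => /(f_equal size); rewrite !size_mkseq; lia.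
have seg : forall m, val (segf z (e m)) = map e (iota 0 m.+1).
  move=> m; rewrite /=; apply: (segl_enum_at (@enumz_incr z Hz)); exact: enumz_range.
have lev : forall m, exists t, [/\ size t = m, node C y a t & bnd e t].
  move=> m.
  have hF : ~ Fprop C y (val (segf z (e m.+1))).
    move=> hF; apply: hno; exists (segf z (e m.+1)); split; first exact: init_seg_segf.
    by apply/pbP.
  rewrite seg in hF.
  have [t [t1 t2 t3]] : exists t, [/\ size t = (size (map e (iota 0 m.+2))).-1,
        node C y (fun i => nth 0 (dec (last 0 (map e (iota 0 m.+2)))) i) t &
        bnd (nth 0 (map e (iota 0 m.+2))) t].
    apply: Classical_Prop.NNPP => hn; apply: hF; split => //.
    apply: (sorted_map_iota (r := fun u v => sp (dec u) (dec v))) => i.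
    have [j [hij hj]] := edec i; have [j' [hij' hj']] := edec i.+1.
    have [j0 hj0] := wdec i; have [j1 hj1] := wdec i.+1.
    have hlt : cseq a j0 < cseq a j1 by rewrite hj0 hj1; exact: enumz_incr.
    rewrite (incr_inj_lt (@cseq_incr a)) in hlt.
    rewrite -hj0 -hj1 !cseq_dec /sp !size_mkseq ltnS hlt andTb.
    have hs : j0.+1 <= size (mkseq a j1.+1) by rewrite size_mkseq; exact: ltnW.
    apply/eqP/(@eq_from_nth _ 0) => [|k]; rewrite size_takel // ?size_mkseq // => hk.
    rewrite nth_take // !nth_mkseq //; lia.
  rewrite size_map size_iota /= in t1.
  rewrite last_map_iota in t2.
  exists (take m t); split.
  - by rewrite size_takel // t1.
  - apply: (node_ext (y := y) (a := fun i => nth 0 (dec (e m.+1)) i)); last exact: node_take.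
    move=> i; rewrite size_takel ?t1 // => hi; split => //.
    have [j [hij hj]] := edec m.+1; rewrite hj nth_mkseq //; lia.
  - move=> i; rewrite size_takel ?t1 // => hi; rewrite nth_take //.
    have := t3 i; rewrite t1 nth_map_iota; last lia.
    by apply; lia.
have [b hb] := konig (P := node C y a) (B := e) (@node_take C y a) ltac:(move=> m; have [t [h1 h2 h3]] := lev m; by exists t).
by apply: (hnb b); apply: branch_C.
Qed.

Lemma segl_rng_fprop C y (ez : nat -> nat) (He : forall i, ez i < ez i.+1) N :
  Fprop C y (segl (rng ez) N) ->
  exists c, segl (rng ez) N = map ez (iota 0 c.+2) /\ Fprop C y (map ez (iota 0 c.+2)).
Proof.
have [c [hc _]] := segl_enum He (rng_range He) N.
rewrite hc => hF; case: hF => h1 h2 h3.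
move: h1; rewrite size_map size_iota; case: c hc h2 h3 => [|[|c]] // hc h2 h3 _.
by exists c; split => //; split.
Qed.

Lemma dirB C y : (exists w, infinite_set w /\ forall z : nat -> bool, (forall k, z k -> w k) ->
    infinite_set z -> exists s, init_seg s z /\ fmap C y s) ->
  exists a, forall b, ~ C y a b.
Proof.
case=> w [Hw hall].
pose e := enumz Hw.
have he : forall i, e i < e i.+1 := enumz_incr Hw.
have getF : forall ez : nat -> nat, (forall i, ez i < ez i.+1) -> (forall i, w (ez i)) ->
    exists c, Fprop C y (map ez (iota 0 c.+2)).
  move=> ez hez hw.
  have [s [hs hF]] := hall (rng ez) ltac:(by move=> k /(rng_range hez) [i <-]) (rng_inf hez).
  have [N hN] := init_segE hs; rewrite hN in hF.
  have [c [_ hc]] := segl_rng_fprop hez (proj1 (pbP _) hF).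
  by exists c.
have chain : forall i, sp (dec (e i)) (dec (e i.+1)).
  move=> i; apply: Classical_Prop.NNPP => hn.
  pose ez j := if j is j'.+1 then e (i + j'.+1) else e i.
  have hez : forall j, ez j < ez j.+1.
    case=> [|j]; rewrite /ez; [rewrite addn1; exact: he | rewrite !addnS; exact: he].
  have [c [_ hs _]] := getF ez hez ltac:(by case=> [|j]; exact: enumz_in).
  move: hs => /=; rewrite /ez addn1 => /andP [hsp _]; exact: hn.
have pref : forall n k, size (dec (e n)) + k <= size (dec (e (n + k)))
      /\ take (size (dec (e n))) (dec (e (n + k))) = dec (e n).
  move=> n; elim=> [|k [IH1 IH2]]; first by rewrite !addn0 take_size.
  have := chain (n + k); case/andP => h3 /eqP h4.
  rewrite addnS; split.
    by rewrite addnS; exact: leq_ltn_trans IH1 h3.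
  have e1 : size (dec (e n)) <= size (dec (e (n + k))) by exact: leq_trans (leq_addr _ _) IH1.
  by rewrite addnS -[RHS]IH2 -h4 take_takel.
have sizeE : forall n, n <= size (dec (e n)).
  by move=> n; have [h _] := pref 0 n; rewrite add0n in h; exact: leq_trans (leq_addl _ _) h.
have nthE : forall n m i, n <= m -> i < size (dec (e n)) -> nth 0 (dec (e n)) i = nth 0 (dec (e m)) i.
  move=> n m i hnm hi; have [_ h] := pref n (m - n); rewrite subnKC // in h.
  by rewrite -h nth_take.
pose a j := nth 0 (dec (e j.+1)) j.
have decA : forall n i, i < size (dec (e n)) -> nth 0 (dec (e n)) i = a i.
  move=> n i hi; rewrite /a (nthE n (maxn n i.+1)) ?leq_maxl //.
  rewrite -(nthE i.+1 (maxn n i.+1)) ?leq_maxr //.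
exists a => b hC.
pose fix h j := if j is j'.+1 then maxn (h j').+1 (b j).+1 else (b 0).+1.
have hh : forall j, h j < h j.+1 by move=> j /=; rewrite leq_maxl.
have hb : forall j, b j < h j by case=> [|j] //=; rewrite leq_maxr.
pose ez j := e (h j).
have hez : forall j, ez j < ez j.+1 by move=> j; rewrite /ez; apply: (incr_lt he); exact: hh.
have [c [h1 h2 h3]] := getF ez hez ltac:(by move=> j; exact: enumz_in).
apply: h3; exists (mkseq b c.+1); split.
- by rewrite size_mkseq size_map size_iota.
- apply: (node_ext (y := y) (a := a)); last exact: node_of_C.
  move=> i; rewrite size_mkseq => hi; split => //.
  rewrite last_map_iota /ez decA //.
  apply: leq_trans (sizeE _); apply: leq_trans (incr_ge hh c.+1); lia.
- move=> i; rewrite size_mkseq => hi; rewrite nth_mkseq // nth_map_iota; last lia.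
  exact: leq_trans (hb i) (incr_ge he _).
Qed.

Theorem mainTheorem14 : Pi12_complete P2.
Proof.
split; first exact: P2_Pi12.
move=> T [P [[C [hcl hC]] hT]].
exists (fmap C); split; first exact: fmap_cont.
move=> y.
have eqv : ~ T y <-> exists a, forall b, ~ C y a b.
  rewrite hT; split; case=> a ha; exists a.
    by move=> b hb; apply: (proj2 (hC y a)) ha; exists b.
  apply: Classical_Prop.NNPP => hn; have [b hb] := proj1 (hC y a) hn; exact: ha b hb.
split.
  move=> hTy [w [hw hwall]].
  have [a ha] := dirB (C := C) (y := y) (ex_intro _ w (conj hw hwall)).
  by apply: (proj2 eqv) hTy; exists a.
move=> hP; apply: Classical_Prop.NNPP => hnT.
have [a ha] := proj1 eqv hnT.
exact: hP (dirA hcl ha).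
Qed.
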